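(* Let $h$ be the morphism on the alphabet $\{1,3,4\}$ given by $h(1)=14$, $h(3)=14$, $h(4)=3$. For all $n\ge5$ one has (i) $\Delta C_Z(\Psi_n)=h^{n-4}(3)$ and (ii) $\Delta C_Z(\Lambda_n)=h^{n-5}(3)$.
   Context: Fibonacci numbers: $F_0=0$, $F_1=1$, $F_n=F_{n-1}+F_{n-2}$. Every integer $N\ge0$ has a unique Zeckendorf expansion $N=\sum_{i\ge0}d_i(N)F_{i+2}$ with $d_i(N)\in\{0,1\}$ and no two consecutive digits equal to $1$; $s_Z(N)=\sum_i d_i(N)$. A point of constancy of $s_Z$ is an integer $N\ge0$ with $s_Z(N+1)=s_Z(N)$. For $n\ge3$ define the integer intervals $\Lambda_n=[F_n,F_{n+1}-1]$ and $\Psi_n=[0,F_n-1]$. For an integer interval $I$ (here $I=\Lambda_n$ or $I=\Psi_n$), let $c_1<c_2<\dots<c_k$ be the points of constancy of $s_Z$ lying in $I$ and let $c_{k+1}$ be the smallest point of constancy of $s_Z$ larger than $\max I$; then $\Delta C_Z(I)$ denotes the word $(c_2-c_1)(c_3-c_2)\cdots(c_{k+1}-c_k)$ over the alphabet of positive integers. *)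

(* Defs.v *)
From mathcomp Require Import all_boot.
Set Implicit Arguments. Unset Strict Implicit. Unset Printing Implicit Defensive.

Fixpoint fib (n : nat) : nat :=
  match n with
  | 0 => 0
  | 1 => 1
  | (m.+1 as k).+1 => fib k + fib m
  end.

Definition top_index (N : nat) : nat := \max_(i < N.+1 | fib i.+2 <= N) i.

(* Zeckendorf expansion computed by the greedy algorithm: the list of the
   indices i with d_i(N) = 1 (in decreasing order).  Fuel N suffices since
   N strictly decreases at every step. *)
Fixpoint zeck_idx_aux (fuel N : nat) : seq nat :=
  match fuel with
  | 0 => [::]
  | f.+1 => if N == 0 then [::]
            else top_index N :: zeck_idx_aux f (N - fib (top_index N).+2)
  end.

Definition zeck_idx (N : nat) : seq nat := zeck_idx_aux N N.

Definition zdigit (i N : nat) : nat := (i \in zeck_idx N).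
Definition sZ (N : nat) : nat := size (zeck_idx N).

Definition is_const_pt (N : nat) : bool := sZ N.+1 == sZ N.

Definition const_pts (a b : nat) : seq nat :=
  [seq c <- iota a (b.+1 - a) | is_const_pt c].

Definition next_const_pt (b c : nat) : Prop :=
  b < c /\ is_const_pt c /\ (forall m, b < m -> is_const_pt m -> c <= m).

Definition diffs (s : seq nat) : seq nat :=
  match s with
  | [::] => [::]
  | x :: t => pairmap (fun u v => v - u) x t
  end.

(* Delta C_Z([a,b]) given the next point of constancy c after b. *)
Definition DeltaCZ (a b c : nat) : seq nat := diffs (const_pts a b ++ [:: c]).

Definition h_letter (x : nat) : seq nat :=
  match x with
  | 1 => [:: 1; 4]
  | 3 => [:: 1; 4]
  | 4 => [:: 3]
  | _ => [::]
  end.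

Definition h (w : seq nat) : seq nat := flatten (map h_letter w).

Definition Psi_lo (n : nat) := 0.
Definition Psi_hi (n : nat) := (fib n).-1.
Definition Lambda_lo (n : nat) := fib n.
Definition Lambda_hi (n : nat) := (fib n.+1).-1.

(* Main.v *)
Require Import Defs.
From mathcomp Require Import all_boot.
From mathcomp Require Import zify.

Lemma fibSS k : fib k.+2 = fib k.+1 + fib k.
Proof. by []. Qed.

Lemma fib_mono : {homo fib : i j / i <= j}.
Proof.
apply: homo_leq => //; first exact: leq_trans.
by case=> // k; rewrite fibSS leq_addr.
Qed.

Lemma fib_pos k : 0 < fib k.+1.
Proof. elim: k => // k IH; rewrite fibSS; lia. Qed.

Lemma fib_ge k : k.+1 <= fib k.+2.
Proof.
elim: k => // k IH; rewrite fibSS.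
have := fib_pos k; lia.
Qed.

Lemma aux_S f N : zeck_idx_aux f.+1 N =
  if N == 0 then [::] else top_index N :: zeck_idx_aux f (N - fib (top_index N).+2).
Proof. by []. Qed.

Lemma aux_fuel f1 f2 N : N <= f1 -> N <= f2 -> zeck_idx_aux f1 N = zeck_idx_aux f2 N.
Proof.
elim: f1 f2 N => [|f1 IH] f2 N.
  by rewrite leqn0 => /eqP -> _; case: f2.
case: f2 => [|f2]; first by rewrite leqn0 => _ /eqP ->.
move=> h1 h2; rewrite !aux_S; case: eqP => // /eqP N0.
have := fib_pos (top_index N).+1 => hp.
congr cons; apply: IH; move: hp N0 h1 h2; clear; lia.
Qed.

Lemma top_indexE i x : x < fib i.+1 -> top_index (fib i.+2 + x) = i.
Proof.
move=> hx; rewrite /top_index; apply/eqP; rewrite eqn_leq; apply/andP; split.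
  apply/bigmax_leqP => k hk; rewrite leqNgt; apply/negP => ik.
  have : fib i.+3 <= fib k.+2 by apply: fib_mono.
  rewrite [fib i.+3]fibSS; lia.
have hi : i < (fib i.+2 + x).+1 by have := fib_ge i; lia.
by apply: (leq_bigmax_cond (Ordinal hi)) => /=; rewrite leq_addr.
Qed.

Lemma sZ_shift i x : x < fib i.+1 -> sZ (fib i.+2 + x) = (sZ x).+1.
Proof.
move=> hx; rewrite /sZ /zeck_idx.
have hp := fib_pos i.+1.
case E: (fib i.+2 + x) => [|m]; first lia.
rewrite aux_S -E.
have -> : (fib i.+2 + x == 0) = false by apply/negbTE; lia.
rewrite top_indexE // addKn /=.
rewrite (aux_fuel _ x) //; lia.
Qed.

Lemma sZ0 : sZ 0 = 0. Proof. by []. Qed.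

Lemma sZ_pos y : 0 < y -> 0 < sZ y.
Proof. by case: y => // y _; rewrite /sZ /zeck_idx /=. Qed.

Lemma sZ_fib k : sZ (fib k.+2) = 1.
Proof. by rewrite -[fib k.+2]addn0 sZ_shift ?fib_pos. Qed.

Lemma filter_cons1 (T : Type) (a : pred T) x s :
  filter a (x :: s) = if a x then x :: filter a s else filter a s.
Proof. by []. Qed.

Lemma sZ1 : sZ 1 = 1. Proof. exact: (sZ_fib 0). Qed.
Lemma sZ2 : sZ 2 = 1. Proof. exact: (sZ_fib 1). Qed.
Lemma sZ3 : sZ 3 = 1. Proof. exact: (sZ_fib 2). Qed.
Lemma sZ5 : sZ 5 = 1. Proof. exact: (sZ_fib 3). Qed.
Lemma sZ8 : sZ 8 = 1. Proof. exact: (sZ_fib 4). Qed.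
Lemma sZ4 : sZ 4 = 2. Proof. by rewrite -[4]/(fib 4 + 1) sZ_shift // sZ1. Qed.
Lemma sZ6 : sZ 6 = 2. Proof. by rewrite -[6]/(fib 5 + 1) sZ_shift // sZ1. Qed.
Lemma sZ7 : sZ 7 = 2. Proof. by rewrite -[7]/(fib 5 + 2) sZ_shift // sZ2. Qed.

Lemma cp0 : is_const_pt 0 = false. Proof. by rewrite /is_const_pt sZ1 sZ0. Qed.
Lemma cp1 : is_const_pt 1 = true. Proof. by rewrite /is_const_pt sZ1 sZ2. Qed.
Lemma cp2 : is_const_pt 2 = true. Proof. by rewrite /is_const_pt sZ3 sZ2. Qed.
Lemma cp3 : is_const_pt 3 = false. Proof. by rewrite /is_const_pt sZ3 sZ4. Qed.
Lemma cp4 : is_const_pt 4 = false. Proof. by rewrite /is_const_pt sZ5 sZ4. Qed.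
Lemma cp5 : is_const_pt 5 = false. Proof. by rewrite /is_const_pt sZ5 sZ6. Qed.
Lemma cp6 : is_const_pt 6 = true. Proof. by rewrite /is_const_pt sZ7 sZ6. Qed.
Lemma cp7 : is_const_pt 7 = false. Proof. by rewrite /is_const_pt sZ7 sZ8. Qed.

Lemma cp_shift i x : x.+1 < fib i.+1 -> is_const_pt (fib i.+2 + x) = is_const_pt x.
Proof.
move=> hx; rewrite /is_const_pt -addnS !sZ_shift // ?(ltnW hx).
by [].
Qed.

Lemma fib4 j : 3 <= fib j.+4.
Proof. exact: (@fib_mono 4 j.+4). Qed.

Lemma cp_fib_pred j : is_const_pt (fib j.+4.+1).-1 = false.
Proof.
have h3 : 2 <= fib j.+3 by exact: (@fib_mono 3 j.+3).
have -> : (fib j.+4.+1).-1 = fib j.+4 + (fib j.+3).-1 by rewrite [fib j.+4.+1]fibSS; lia.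
rewrite /is_const_pt.
have -> : sZ (fib j.+4 + (fib j.+3).-1) = (sZ (fib j.+3).-1).+1 by apply: sZ_shift; lia.
rewrite -addnS.
have -> : fib j.+4 + ((fib j.+3).-1).+1 = fib j.+4.+1 by rewrite [fib j.+4.+1]fibSS; lia.
rewrite sZ_fib; apply/negbTE; rewrite eqSS.
have := @sZ_pos (fib j.+3).-1 ltac:(lia); lia.
Qed.

Lemma shift_filter j :
  [seq c <- iota (fib j.+4.+2) (fib j.+4.+1) | is_const_pt c] =
  map (addn (fib j.+4.+2)) [seq c <- iota 0 (fib j.+4.+1) | is_const_pt c].
Proof.
rewrite -{1}[fib j.+4.+2]addn0 iotaDl filter_map; congr map.
apply: eq_in_filter => x; rewrite mem_iota add0n => /andP[_ hx] /=.
have [hx1|hx1] := ltnP x.+1 (fib j.+4.+1); first exact: (@cp_shift j.+4 x hx1).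
have -> : x = (fib j.+4.+1).-1 by lia.
rewrite cp_fib_pred.
have -> : fib j.+4.+2 + (fib j.+4.+1).-1 = (fib j.+4.+3).-1.
  have := fib_pos j.+4; rewrite [fib j.+4.+3]fibSS; lia.
exact: (cp_fib_pred j.+2).
Qed.

Definition P k := [seq c <- iota 0 (fib k) | is_const_pt c].
Definition Q k := P k ++ [:: (fib k).+1].
Definition W k := diffs (Q k).

Lemma P_head j : exists s, P j.+4.+1 = 1 :: s.
Proof.
have h5 : 5 <= fib j.+4.+1 by exact: (@fib_mono 5 j.+4.+1).
rewrite /P; have -> : fib j.+4.+1 = (fib j.+4.+1 - 2).+2 by lia.
by rewrite -[iota 0 _]/(0 :: 1 :: iota 2 _) !filter_cons1 cp0 cp1; eexists.
Qed.

Lemma P_rec j : P j.+4.+3 = P j.+4.+2 ++ map (addn (fib j.+4.+2)) (P j.+4.+1).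
Proof. by rewrite /P [fib j.+4.+3]fibSS iotaD filter_cat shift_filter. Qed.

Lemma diffs_map a s : diffs (map (addn a) s) = diffs s.
Proof.
case: s => //= x t; elim: t x => //= y t IH x.
by rewrite IH subnDl.
Qed.

Lemma diffs_cat x s y t :
  diffs ((x :: s) ++ y :: t) = diffs ((x :: s) ++ [:: y]) ++ diffs (y :: t).
Proof.
rewrite /diffs /=; set f := fun u v => v - u.
by elim: s x => [|z s IH] x //=; rewrite IH.
Qed.

Lemma W_rec_gen a c s t :
  diffs (((1 :: s) ++ map (addn a) (1 :: t)) ++ [:: a + c.+1]) =
  diffs ((1 :: s) ++ [:: a.+1]) ++ diffs ((1 :: t) ++ [:: c.+1]).
Proof.
rewrite -(diffs_map a ((1 :: t) ++ _)) map_cat -catA.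
have -> : map (addn a) (1 :: t) = a.+1 :: map (addn a) t by rewrite /= addn1.
by move: (diffs_cat 1 s a.+1 ([seq a + i | i <- t] ++ [:: a + c.+1])) => /= ->.
Qed.

Lemma W_rec j : W j.+4.+3 = W j.+4.+2 ++ W j.+4.+1.
Proof.
rewrite /W /Q P_rec.
have [s Hs] := P_head j.+1; have [t Ht] := P_head j.
rewrite Hs Ht.
have -> : (fib j.+4.+3).+1 = fib j.+4.+2 + (fib j.+4.+1).+1 by rewrite [fib j.+4.+3]fibSS; lia.
exact: W_rec_gen.
Qed.

Lemma h_cat s t : h (s ++ t) = h s ++ h t.
Proof. by rewrite /h map_cat flatten_cat. Qed.

Lemma iter_cat k s t : iter k h (s ++ t) = iter k h s ++ iter k h t.
Proof. by elim: k => //= k ->; rewrite h_cat. Qed.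

Lemma iter_rec k : iter k.+2 h [:: 3] = iter k.+1 h [:: 3] ++ iter k h [:: 3].
Proof.
rewrite iterSr -[h [:: 3]]/([:: 1] ++ [:: 4]) iter_cat.
by rewrite !iterSr.
Qed.

Lemma W5 : W 5 = iter 1 h [:: 3].
Proof.
rewrite /W /Q /P; have -> : iota 0 (fib 5) = [:: 0; 1; 2; 3; 4] by [].
by rewrite !filter_cons1 cp0 cp1 cp2 cp3 cp4.
Qed.

Lemma W6 : W 6 = iter 2 h [:: 3].
Proof.
rewrite /W /Q /P; have -> : iota 0 (fib 6) = [:: 0; 1; 2; 3; 4; 5; 6; 7] by [].
by rewrite !filter_cons1 cp0 cp1 cp2 cp3 cp4 cp5 cp6 cp7.
Qed.

Lemma W_iter j : W j.+4.+1 = iter j.+1 h [:: 3].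
Proof.
elim: j {-2}j (leqnn j) => [|k IH] j hj.
  by move: hj; rewrite leqn0 => /eqP ->; exact: W5.
case: j hj => [|[|j]] hj; first exact: W5; first exact: W6.
rewrite W_rec iter_rec !IH //; lia.
Qed.

Lemma next_fib j : next_const_pt (fib j.+4.+1).-1 (fib j.+4.+1).+1.
Proof.
have h3 := fib4 j; have hp := fib_pos j.+4.
have c1 : is_const_pt (fib j.+4.+1).+1.
  by rewrite -addn1 cp_shift ?cp1 //; lia.
have c0 : is_const_pt (fib j.+4.+1) = false.
  by rewrite -[fib j.+4.+1]addn0 cp_shift ?cp0 //; lia.
split; first lia. split => // m hm cm.
have : m != fib j.+4.+1 by apply/eqP => E; rewrite E c0 in cm.
lia.
Qed.

Theorem proposition1 (n : nat) (hn : 5 <= n) :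
  (exists c, next_const_pt (Psi_hi n) c /\
     DeltaCZ (Psi_lo n) (Psi_hi n) c = iter (n - 4) h [:: 3]) /\
  (exists c, next_const_pt (Lambda_hi n) c /\
     DeltaCZ (Lambda_lo n) (Lambda_hi n) c = iter (n - 5) h [:: 3]).
Proof.
have [j ->] : exists j, n = j.+4.+1 by exists (n - 5); lia.
have hp := fib_pos j.+4; have hp' := fib_pos j.+4.+1.
split.
  exists (fib j.+4.+1).+1; split; first exact: next_fib.
  rewrite /DeltaCZ /Psi_lo /Psi_hi /const_pts subn0 prednK //.
  have -> : j.+4.+1 - 4 = j.+1 by lia.
  by rewrite -W_iter.
exists (fib j.+4.+2).+1; split; first exact: (next_fib j.+1).
rewrite /DeltaCZ /Lambda_lo /Lambda_hi /const_pts prednK //.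
have -> : fib j.+4.+2 - fib j.+4.+1 = fib j.+4 by rewrite [fib j.+4.+2]fibSS; lia.
have -> : j.+4.+1 - 5 = j by lia.
case: j hp hp' => [|j] hp hp'.
  have -> : iota (fib 5) (fib 4) = [:: 5; 6; 7] by [].
  by rewrite !filter_cons1 cp5 cp6 cp7.
rewrite shift_filter -W_iter /W /Q -/(P _).
have -> : (fib j.+4.+3).+1 = fib j.+4.+2 + (fib j.+4.+1).+1 by rewrite [fib j.+4.+3]fibSS; lia.
by rewrite -[[:: fib j.+4.+2 + _]]/(map (addn (fib j.+4.+2)) [:: (fib j.+4.+1).+1]) -map_cat diffs_map.
Qed.
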